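(* Let $I_{A_1,A_2}(x,y)=A_1(N(x),A_2(x,y))$ be a QL-implication. Then there exist a disjunctor $A$ and a fuzzy negation $N'$ such that, for every conjunctor $A'$, $I_{A_1,A_2}$ satisfies (A5) with $A'$ if and only if the $(A,N')$-implication $I_{A,N'}(x,y)=A(N'(x),y)$ satisfies (A5) with $A'$.
   Context: An aggregation function is a map $[0,1]^2\to[0,1]$, non-decreasing in each variable, with value $0$ at $(0,0)$ and $1$ at $(1,1)$; a conjunctor additionally has $A(1,0)=A(0,1)=0$, a disjunctor additionally has $A(1,0)=A(0,1)=1$. A fuzzy negation is a non-increasing $N:[0,1]\to[0,1]$ with $N(0)=1$, $N(1)=0$. A QL-implication is $I_{A_1,A_2}(x,y)=A_1(N(x),A_2(x,y))$ with $A_1,A_2$ aggregation functions and $N$ a fuzzy negation, such that $I_{A_1,A_2}$ is non-increasing in $x$ and $I(0,0)=I(1,1)=1$, $I(1,0)=0$. A fuzzy set on a nonempty set $U$ is a map $U\to[0,1]$, normal if it attains $1$. ''$I$ satisfies (A5) with $A'$'' means: for all nonempty sets $U,V$, all normal fuzzy sets $D$ on $U$, $B$ on $V$ and every $y\in V$, $\sup_{x\in U}A'(D(x),I(D(x),B(y)))=B(y)$. *)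

(* Defs.v *)
(* the unit interval is [0,1] inside Stdlib's R; binary
   operations on [0,1] are represented as R -> R -> R and all axioms are
   only required on [0,1]. *)
From Stdlib Require Import Reals.
Open Scope R_scope.

Definition unit_I (x : R) : Prop := 0 <= x <= 1.

Definition aggregation (A : R -> R -> R) : Prop :=
  (forall x y, unit_I x -> unit_I y -> unit_I (A x y)) /\
  (forall x1 x2 y, unit_I x1 -> unit_I x2 -> unit_I y -> x1 <= x2 -> A x1 y <= A x2 y) /\
  (forall x y1 y2, unit_I x -> unit_I y1 -> unit_I y2 -> y1 <= y2 -> A x y1 <= A x y2) /\
  A 0 0 = 0 /\ A 1 1 = 1.

Definition conjunctor (A : R -> R -> R) : Prop :=
  aggregation A /\ A 1 0 = 0 /\ A 0 1 = 0.

Definition disjunctor (A : R -> R -> R) : Prop :=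
  aggregation A /\ A 1 0 = 1 /\ A 0 1 = 1.

Definition fuzzy_negation (N : R -> R) : Prop :=
  (forall x, unit_I x -> unit_I (N x)) /\
  (forall x1 x2, unit_I x1 -> unit_I x2 -> x1 <= x2 -> N x2 <= N x1) /\
  N 0 = 1 /\ N 1 = 0.

Definition QL_op (A1 A2 : R -> R -> R) (N : R -> R) : R -> R -> R :=
  fun x y => A1 (N x) (A2 x y).

Definition QL_implication (A1 A2 : R -> R -> R) (N : R -> R) : Prop :=
  aggregation A1 /\ aggregation A2 /\ fuzzy_negation N /\
  (forall x1 x2 y, unit_I x1 -> unit_I x2 -> unit_I y -> x1 <= x2 ->
      QL_op A1 A2 N x2 y <= QL_op A1 A2 N x1 y) /\
  QL_op A1 A2 N 0 0 = 1 /\ QL_op A1 A2 N 1 1 = 1 /\ QL_op A1 A2 N 1 0 = 0.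

Definition AN_op (A : R -> R -> R) (N : R -> R) : R -> R -> R :=
  fun x y => A (N x) y.

Definition normal_fuzzy_set {U : Type} (D : U -> R) : Prop :=
  (forall u, unit_I (D u)) /\ exists u, D u = 1.

Definition satisfies_A5 (I : R -> R -> R) (A' : R -> R -> R) : Prop :=
  forall (U V : Type), inhabited U -> inhabited V ->
  forall (D : U -> R) (B : V -> R),
    normal_fuzzy_set D -> normal_fuzzy_set B ->
    forall y : V,
      is_lub (fun r => exists x : U, r = A' (D x) (I (D x) (B y))) (B y).

(* Main.v *)
Require Import Defs.
From Stdlib Require Import Reals Lra FunctionalExtensionality.
Open Scope R_scope.

Theorem theorem4p14 (A1 A2 : R -> R -> R) (N : R -> R) :
  QL_implication A1 A2 N ->
  exists (A : R -> R -> R) (N' : R -> R),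
    disjunctor A /\ fuzzy_negation N' /\
    forall A' : R -> R -> R, conjunctor A' ->
      (satisfies_A5 (QL_op A1 A2 N) A' <-> satisfies_A5 (AN_op A N') A').
Proof.
  intros [HA1 [HA2 [HN [Hdec [H00 [H11 H10]]]]]].
  destruct HA1 as [R1 [M1x [M1y [Z1 O1]]]].
  destruct HA2 as [R2 [M2x [M2y [Z2 O2]]]].
  destruct HN as [RN [MN [N0 N1]]].
  exists (fun u y => QL_op A1 A2 N (1 - u) y), (fun x => 1 - x).
  assert (Hu : forall x, unit_I x -> unit_I (1 - x)) by (unfold unit_I; intros; lra).
  assert (HR : forall x y, unit_I x -> unit_I y -> unit_I (QL_op A1 A2 N x y)).
  { intros x y Hx Hy. unfold QL_op. apply R1; auto. }
  assert (HI0 : forall y, unit_I y -> QL_op A1 A2 N 0 y = 1).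
  { intros y Hy. assert (h1 := HR 0 y ltac:(unfold unit_I; lra) Hy).
    assert (QL_op A1 A2 N 0 0 <= QL_op A1 A2 N 0 y).
    { unfold QL_op. apply M1y; try apply R2; try apply RN; unfold unit_I in *; try lra.
      apply M2y; unfold unit_I in *; lra. }
    unfold unit_I in h1; lra. }
  split; [|split].
  - split; [|split].
    + split; [|split; [|split; [|split]]].
      * intros x y Hx Hy. apply HR; auto.
      * intros x1 x2 y Hx1 Hx2 Hy Hle. apply Hdec; auto. lra.
      * intros x y1 y2 Hx Hy1 Hy2 Hle. unfold QL_op.
        apply M1y; try apply RN; try apply R2; auto.

      * replace (1 - 0) with 1 by lra. exact H10.
      * replace (1 - 1) with 0 by lra. apply HI0. unfold unit_I; lra.
    + replace (1 - 1) with 0 by lra. exact H00.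
    + replace (1 - 0) with 1 by lra. exact H11.
  - split; [|split; [|split]].
    + exact Hu.
    + intros; lra.
    + lra.
    + lra.
  - intros A' _.
    assert (E : AN_op (fun u y => QL_op A1 A2 N (1 - u) y) (fun x => 1 - x) = QL_op A1 A2 N).
    { apply functional_extensionality; intro x.
      apply functional_extensionality; intro y.
      unfold AN_op. replace (1 - (1 - x)) with x by lra. reflexivity. }
    rewrite E. tauto.
Qed.
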